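(* Let $K$ be a field and let $M,N\in M_n(K)$ be two simultaneously diagonalizable matrices. Let $t$ be drawn from the uniform distribution on a finite set $S\subset K$. Then with probability at least $1-\frac{n(n-1)}{2|S|}$, every invertible matrix $T$ such that $T^{-1}(M+tN)T$ is diagonal also satisfies that $T^{-1}MT$ and $T^{-1}NT$ are diagonal. *)

(* Defs.v *)
From mathcomp Require Import all_boot all_order all_algebra.
From mathcomp Require Import boolp.
Set Implicit Arguments. Unset Strict Implicit. Unset Printing Implicit Defensive.
Import GRing.Theory Num.Theory.
Local Open Scope ring_scope.

Definition simult_diagonalizable (K : fieldType) (n : nat) (M N : 'M[K]_n) : Prop :=
  exists P : 'M[K]_n, P \in unitmx /\
    is_diag_mx (invmx P *m M *m P) /\ is_diag_mx (invmx P *m N *m P).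

Definition good_param (K : fieldType) (n : nat) (M N : 'M[K]_n) (t : K) : Prop :=
  forall T : 'M[K]_n, T \in unitmx ->
    is_diag_mx (invmx T *m (M + t *: N) *m T) ->
    is_diag_mx (invmx T *m M *m T) /\ is_diag_mx (invmx T *m N *m T).

(* Probability of the good event when t is uniform on the finite set S
   (given as a duplicate-free nonempty list). *)
Definition prob_good (K : fieldType) (n : nat) (M N : 'M[K]_n) (S : seq K) : rat :=
  (count (fun t => `[< good_param M N t >]) S)%:R / (size S)%:R.

(* Main.v *)
Require Import Defs.
From mathcomp Require Import all_boot all_order all_algebra.
From mathcomp Require Import boolp.
From mathcomp Require Import ring zify.
Import GRing.Theory Num.Theory.
Local Open Scope ring_scope.

Lemma key (K : fieldType) (n : nat) (X C Q E R : 'M[K]_n) :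
  is_diag_mx X -> is_diag_mx C -> is_diag_mx E -> R *m Q = 1%:M ->
  C *m Q = Q *m E ->
  (forall i j, C i i = C j j -> X i i = X j j) ->
  is_diag_mx (R *m X *m Q).
Proof.
move=> /is_diag_mxP dX /is_diag_mxP dC /is_diag_mxP dE RQ CQ hX.
pose f := \row_j (if [pick i | Q i j != 0] is Some k then X k k else 0).
have eig : forall i j, Q i j != 0 -> C i i = E j j.
  move=> i j nz; have := congr1 (fun A : 'M[K]_n => A i j) CQ; rewrite /= !mxE.
  rewrite (bigD1 i) //= big1 ?addr0; last first.
    by move=> k ki; rewrite dC ?mul0r // eq_sym.
  rewrite (bigD1 j) //= big1 ?addr0; last first.
    by move=> k kj; rewrite dE ?mulr0 //.
  by rewrite mulrC => /mulfI; apply.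
have XQ : X *m Q = Q *m diag_mx f.
  apply/matrixP => i j; rewrite mul_mx_diag !mxE.
  rewrite (bigD1 i) //= big1 ?addr0; last first.
    by move=> k ki; rewrite dX ?mul0r // eq_sym.
  have [->|nz] := eqVneq (Q i j) 0; first by rewrite mulr0 mul0r.
  case: pickP => [k /= nzk|/(_ i) /=]; last by rewrite nz.
  rewrite mulrC; congr (_ * _); apply: hX.
  by rewrite (eig _ _ nz) (eig _ _ nzk).
by rewrite -mulmxA XQ mulmxA RQ mul1mx diag_mx_is_diag.
Qed.

Lemma addscE (K : fieldType) (n : nat) (A B : 'M[K]_n) t i j :
  (A + t *: B) i j = A i j + t * B i j.
Proof. by rewrite !mxE. Qed.

Lemma diag_addsc (K : fieldType) (n : nat) (A B : 'M[K]_n) t :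
  is_diag_mx A -> is_diag_mx B -> is_diag_mx (A + t *: B).
Proof.
move=> /is_diag_mxP dA /is_diag_mxP dB; apply/is_diag_mxP => i j ij.
by rewrite addscE dA // dB // mulr0 addr0.
Qed.

Lemma sumn_iota2 (n : nat) : (sumn (iota 0 n) * 2 = n * (n - 1))%N.
Proof.
elim: n => // n IH; rewrite -addn1 iotaD sumn_cat /=.
nia.
Qed.

Theorem proposition2 (K : fieldType) (n : nat) (M N : 'M[K]_n) (S : seq K) :
  simult_diagonalizable M N -> uniq S -> (0 < size S)%N ->
  1 - (n * (n - 1))%:R / (2 * size S)%:R <= prob_good M N S.
Proof.
move=> [P [uP [dA dB]]] uS s0.
set A := invmx P *m M *m P in dA; set B := invmx P *m N *m P in dB.
pose a (k : nat) := if (insub k : option 'I_n) is Some i then A i i else 0.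
pose b (k : nat) := if (insub k : option 'I_n) is Some i then B i i else 0.
have aE (i : 'I_n) : a i = A i i by rewrite /a valK.
have bE (i : 'I_n) : b i = B i i by rewrite /b valK.
pose L := [seq (a j - a i) / (b i - b j) | i <- iota 0 n, j <- iota 0 i].
have goodL : forall t, t \notin L -> good_param M N t.
  move=> t tL T uT dT.
  have hyp : forall i j : 'I_n, A i i + t * B i i = A j j + t * B j j ->
      A i i = A j j /\ B i i = B j j.
    move=> i j h; case: (eqVneq (B i i) (B j j)) => hb.
      by rewrite hb in h; split => //; exact: (addIr _ h).
    exfalso; move/negP: tL; apply.
    have ht : t * (B i i - B j j) = A j j - A i i.
      apply: (addIr (A i i + t * B j j)).
      transitivity (A i i + t * B i i); first by ring.
      by rewrite h; ring.
    have -> : t = (A j j - A i i) / (B i i - B j j).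
      by rewrite -ht mulfK // subr_eq0.
    case: (ltngtP (val i) (val j)) => hij.
    - have -> : (A j j - A i i) / (B i i - B j j) =
                (a i - a j) / (b j - b i).
        by rewrite !aE !bE -mulrNN -invrN !opprB.
      rewrite /L; apply: (@allpairs_f_dep nat (fun _ => nat) K (fun i j => (a j - a i) / (b i - b j))).
        by rewrite mem_iota add0n ?ltn_ord ?hij.
      by rewrite mem_iota add0n ?ltn_ord ?hij.
    - rewrite -!aE -!bE.
      rewrite /L; apply: (@allpairs_f_dep nat (fun _ => nat) K (fun i j => (a j - a i) / (b i - b j))).
        by rewrite mem_iota add0n ?ltn_ord ?hij.
      by rewrite mem_iota add0n ?ltn_ord ?hij.
    - by move/val_inj: hij hb => ->; rewrite eqxx.
  set Q := invmx P *m T; set R := invmx T *m P.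
  have RQ : R *m Q = 1%:M.
    by rewrite /R /Q -!mulmxA mulKVmx // mulVmx.
  have CQ : (A + t *: B) *m Q = Q *m (invmx T *m (M + t *: N) *m T).
    have -> : A + t *: B = invmx P *m (M + t *: N) *m P.
      by rewrite /A /B mulmxDr mulmxDl scalemxAl scalemxAr.
    by rewrite /Q -!mulmxA !mulKVmx.
  have dC : is_diag_mx (A + t *: B).
    exact: diag_addsc.
  have EX X : invmx T *m X *m T = R *m (invmx P *m X *m P) *m Q.
    by rewrite /R /Q -!mulmxA !mulKVmx.
  rewrite !EX; split.
  - refine (@key _ _ _ _ _ _ _ dA dC dT RQ CQ _) => i j; rewrite !addscE => /hyp [].
    done.
  - refine (@key _ _ _ _ _ _ _ dB dC dT RQ CQ _) => i j; rewrite !addscE => /hyp [].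
    done.
have sizeL : (size L * 2 = n * (n - 1))%N.
  rewrite size_allpairs_dep (eq_map (fun x => size_iota 0 x)) map_id.
  exact: sumn_iota2.
have cnt : (size S <= count (fun t => `[< good_param M N t >]) S + size L)%N.
  rewrite -(count_predC (fun t => `[< good_param M N t >]) S) leq_add2l.
  apply: (@leq_trans (count (mem L) S)).
    apply: sub_count => t /=; case: (boolP (t \in L)) => // /goodL.
    by move/asboolP => ->.
  rewrite -size_filter; apply: uniq_leq_size; first exact: filter_uniq.
  by move=> x; rewrite mem_filter => /andP[].
rewrite /prob_good -sizeL mulnC.
set c := count _ _ in cnt *; set l := size L in cnt *; set s := size S in s0 cnt *.
have hs : (0 : rat) < s%:R by rewrite ltr0n.
have hs0 : (s%:R : rat) != 0 by rewrite pnatr_eq0 -lt0n.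
rewrite !natrM -mulf_div divff ?mul1r; last by rewrite pnatr_eq0.
rewrite -(ler_pM2r hs) mulrBl mul1r !divfK //.
by rewrite lerBlDr -natrD ler_nat.
Qed.
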